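(* Each of the following eight sets of four generalized Bell states in $\mathbb{C}^4\otimes\mathbb{C}^4$ is perfectly distinguishable by one-way LOCC using only projective measurements: $\{\ket{\psi_{00}}\}\cup T$ with $T$ one of $\{\ket{\psi_{01}},\ket{\psi_{02}},\ket{\psi_{12}}\}$, $\{\ket{\psi_{01}},\ket{\psi_{02}},\ket{\psi_{30}}\}$, $\{\ket{\psi_{01}},\ket{\psi_{11}},\ket{\psi_{21}}\}$, $\{\ket{\psi_{01}},\ket{\psi_{12}},\ket{\psi_{20}}\}$, $\{\ket{\psi_{01}},\ket{\psi_{20}},\ket{\psi_{30}}\}$, $\{\ket{\psi_{01}},\ket{\psi_{21}},\ket{\psi_{33}}\}$, $\{\ket{\psi_{02}},\ket{\psi_{10}},\ket{\psi_{21}}\}$, $\{\ket{\psi_{02}},\ket{\psi_{21}},\ket{\psi_{32}}\}$.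
   Context: Generalized Bell states in $\mathbb{C}^4\otimes\mathbb{C}^4$ (Alice holds the first factor, Bob the second): $\ket{\psi_{nm}}=\frac12\sum_{j=0}^{3}e^{2\pi i jn/4}\ket{j}_A\ket{j\oplus_4 m}_B$ for $n,m\in\{0,1,2,3\}$, where $j\oplus_4 m=(j+m)\bmod 4$. Perfect distinguishability by one-way LOCC using only projective measurements means: one party performs a projective measurement on her subsystem, communicates the outcome classically, and the other party then performs a projective measurement (depending on that outcome) whose result identifies with certainty which state of the set was shared. *)

(* Defs.v *)
(* Complex scalars: an arbitrary numClosedFieldType C
   (algebraically closed field with conjugation and order, e.g. algC). *)
From HB Require Import structures.
From mathcomp Require Import all_boot all_order all_algebra.
Set Implicit Arguments. Unset Strict Implicit. Unset Printing Implicit Defensive.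
Import Order.TTheory GRing.Theory Num.Theory.
Local Open Scope ring_scope.

Section Defs.
Variable C : numClosedFieldType.

Definition adj_mx (d : nat) (A : 'M[C]_d) : 'M[C]_d := (map_mx Num.conj A)^T.

Definition projective_measurement (d m : nat) (P : 'I_m -> 'M[C]_d) : Prop :=
  [/\ forall k, adj_mx (P k) = P k,
      forall k, P k *m P k = P k,
      forall k l, k != l -> P k *m P l = 0
    & \sum_(k < m) P k = 1%:M].

(* A bipartite vector in C^d (x) C^d: psi a b is the coefficient of |a>_A|b>_B. *)
Definition tens_act (d : nat) (A B : 'M[C]_d) (psi : 'M[C]_d) : 'M[C]_d :=
  \matrix_(a, b) \sum_(a' < d) \sum_(b' < d) A a a' * B b b' * psi a' b'.

Definition outcome_prob (d : nat) (A B psi : 'M[C]_d) : C :=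
  \sum_(a < d) \sum_(b < d) Num.conj (psi a b) * tens_act A B psi a b.

(* One-way LOCC with projective measurements, Alice first: Alice measures
   P (outcomes 'I_m), tells k to Bob, Bob measures Q k (outcomes 'I_n);
   the guess g k l identifies the state with certainty. *)
Definition oneway_alice_first (d r : nat) (psi : 'I_r -> 'M[C]_d) : Prop :=
  exists (m n : nat) (P : 'I_m -> 'M[C]_d) (Q : 'I_m -> 'I_n -> 'M[C]_d)
         (g : 'I_m -> 'I_n -> 'I_r),
    [/\ projective_measurement P,
        forall k, projective_measurement (Q k)
      & forall s k l, outcome_prob (P k) (Q k l) (psi s) != 0 -> g k l = s].

Definition oneway_bob_first (d r : nat) (psi : 'I_r -> 'M[C]_d) : Prop :=
  exists (m n : nat) (Q : 'I_m -> 'M[C]_d) (P : 'I_m -> 'I_n -> 'M[C]_d)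
         (g : 'I_m -> 'I_n -> 'I_r),
    [/\ projective_measurement Q,
        forall l, projective_measurement (P l)
      & forall s l k, outcome_prob (P l k) (Q l) (psi s) != 0 -> g l k = s].

Definition oneway_LOCC_proj_distinguishable (d r : nat) (psi : 'I_r -> 'M[C]_d)
  : Prop := oneway_alice_first psi \/ oneway_bob_first psi.

(* generalized Bell state psi_{nm} in C^4 (x) C^4:
   (1/2) sum_j e^{2 pi i j n/4} |j>|j+m mod 4>,  e^{2 pi i jn/4} = 'i^(jn). *)
Definition bell (nm : nat * nat) : 'M[C]_4 :=
  \matrix_(a, b) (if (b : nat) == ((a + nm.2) %% 4)%N
                  then 2^-1 * 'i ^+ (a * nm.1) else 0).

Definition bell_family (s : seq (nat * nat)) : 'I_(size s) -> 'M[C]_4 :=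
  fun i => bell (nth (0%N, 0%N) s i).

End Defs.

Definition theorem5_sets : seq (seq (nat * nat)) :=
  [:: [:: (0,1); (0,2); (1,2)];
      [:: (0,1); (0,2); (3,0)];
      [:: (0,1); (1,1); (2,1)];
      [:: (0,1); (1,2); (2,0)];
      [:: (0,1); (2,0); (3,0)];
      [:: (0,1); (2,1); (3,3)];
      [:: (0,2); (1,0); (2,1)];
      [:: (0,2); (2,1); (3,2)]]%N.

(* Main.v *)
Require Import Defs.
From HB Require Import structures.
From mathcomp Require Import all_boot all_order all_algebra.
From mathcomp Require Import ring.
Import Order.TTheory GRing.Theory Num.Theory.
Local Open Scope ring_scope.
Record z8 := Z8 { c0 : int; c1 : int; c2 : int; c3 : int }.
Definition zadd x y := Z8 (c0 x + c0 y) (c1 x + c1 y) (c2 x + c2 y) (c3 x + c3 y).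
Definition zmul x y :=
  Z8 (c0 x * c0 y - c1 x * c3 y - c2 x * c2 y - c3 x * c1 y)
     (c0 x * c1 y + c1 x * c0 y - c2 x * c3 y - c3 x * c2 y)
     (c0 x * c2 y + c1 x * c1 y + c2 x * c0 y - c3 x * c3 y)
     (c0 x * c3 y + c1 x * c2 y + c2 x * c1 y + c3 x * c0 y).
Definition zconj x := Z8 (c0 x) (- c3 x) (- c2 x) (- c1 x).
Definition zeqb x y := [&& c0 x == c0 y, c1 x == c1 y, c2 x == c2 y & c3 x == c3 y].
Definition z0 := Z8 0 0 0 0.
Definition zn (n : nat) := Z8 n%:Z 0 0 0.
Definition zi := Z8 0 0 1 0.
Fixpoint zpow x (k : nat) := if k is k'.+1 then zmul (zpow x k') x else zn 1.

Section C.
Variable C : numClosedFieldType.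
Definition s2 : C := sqrtC 2.
Definition zeta : C := (1 + 'i) / s2.
Lemma s2_sq : s2 ^+ 2 = 2. Proof. exact: sqrtCK. Qed.
Lemma s2_neq0 : s2 != 0.
Proof. apply/eqP => h; have := s2_sq; rewrite h expr0n /= => /eqP; by rewrite eq_sym pnatr_eq0. Qed.
Lemma s2_conj : s2^* = s2.
Proof. by apply: geC0_conj; rewrite sqrtC_ge0 ler0n. Qed.
Lemma zeta2 : zeta ^+ 2 = 'i.
Proof. rewrite /zeta. have h := s2_sq. have hi := sqrCi C. have hs := s2_neq0.
 field: h hi. exact hs. Qed.
Lemma zeta4 : zeta ^+ 4 = -1.
Proof. by rewrite (_ : 4 = 2 * 2)%N // exprM zeta2 sqrCi. Qed.
Lemma zeta_conj : zeta^* = - zeta ^+ 3.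
Proof.
rewrite /zeta rmorphM /= fmorphV /= s2_conj rmorphD /= rmorph1 conjCi.
have h := s2_sq. have hi := sqrCi C. have hs := s2_neq0.
field: h hi. exact hs.
Qed.
Definition zc (x : z8) : C :=
  (c0 x)%:~R + (c1 x)%:~R * zeta + (c2 x)%:~R * zeta ^+ 2 + (c3 x)%:~R * zeta ^+ 3.
Lemma zc_add x y : zc (zadd x y) = zc x + zc y.
Proof. rewrite /zc /= !intrD. ring. Qed.
Lemma zc_mul x y : zc (zmul x y) = zc x * zc y.
Proof. rewrite /zc /= !(intrD, intrM, intrB). have h := zeta4. ring: h. Qed.
Lemma zc_conj x : (zc x)^* = zc (zconj x).
Proof.
rewrite /zc /= !rmorphD !(rmorphM _ (_%:~R)) !rmorphXn !rmorph_int.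
have -> : Num.Num_conj__canonical__GRing_RMorphism C zeta = - zeta ^+ 3 by exact: zeta_conj.
rewrite !intrN.
have h := zeta4. ring: h.
Qed.
Lemma zc_n n : zc (zn n) = n%:R.
Proof. rewrite /zc /=. ring. Qed.
Lemma zc_i : zc zi = 'i.
Proof. rewrite /zc /= zeta2. ring. Qed.
Lemma zc_pow x k : zc (zpow x k) = zc x ^+ k.
Proof. elim: k => [|k IH] /=; first by rewrite zc_n. by rewrite zc_mul IH exprS mulrC. Qed.
Lemma zc_eq x y : zeqb x y -> zc x = zc y.
Proof. by case: x y => a b c d [a1 b1 c1 d1]; rewrite /zeqb /= => /and4P[/eqP-> /eqP-> /eqP-> /eqP->]. Qed.
End C.

Definition zsum4 (f : nat -> z8) := zadd (zadd (zadd (f 0%N) (f 1%N)) (f 2%N)) (f 3%N).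
Definition all4 (p : nat -> bool) := all p (iota 0 4).
Lemma all4P p : all4 p -> forall k : 'I_4, p k.
Proof. by move/allP => h k; apply: h; rewrite mem_iota /= ltn_ord. Qed.

Definition deltaz (a c : nat) := if a == c then zn 4 else z0.
Definition check_meas (F : nat -> nat -> z8) :=
  all4 (fun k => all4 (fun l => zeqb (zsum4 (fun b => zmul (zconj (F k b)) (F l b))) (deltaz k l)))
  && all4 (fun a => all4 (fun c => zeqb (zsum4 (fun k => zmul (F k a) (zconj (F k c)))) (deltaz a c))).

Definition amp (u v : nat -> z8) (n m : nat) :=
  zsum4 (fun a => zmul (zmul (zconj (u a)) (zconj (v ((a + m) %% 4)%N))) (zpow zi (a * n))).

Definition zz1 := Z8 0 1 0 0.
Definition phasesA : seq (seq nat) := [:: [:: 0; 1; 4; 1]; [:: 0; 3; 0; 7]; [:: 0; 5; 4; 5]; [:: 0; 7; 0; 3]]%N.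
Definition FA (k a : nat) := zpow zz1 (nth 0%N (nth [::] phasesA k) a).
Definition chi (nm : nat * nat) (u : nat -> z8) (b : nat) :=
  zmul (zconj (u ((b + 4 - nm.2) %% 4)%N)) (zpow zi (((b + 4 - nm.2) %% 4) * nm.1)%N).
Definition good (S : seq (nat * nat)) :=
  [&& check_meas FA,
      all4 (fun k => check_meas (fun l => chi (nth (0,0)%N S l) (FA k)))
    & all4 (fun k => all4 (fun l => all4 (fun s => (s == l) ||
        zeqb (amp (FA k) (chi (nth (0,0)%N S l) (FA k)) (nth (0,0)%N S s).1 (nth (0,0)%N S s).2) z0)))].
Lemma all_good : all (fun T => (size T == 3%N) && good ((0,0)%N :: T)) theorem5_sets.
Proof. vm_compute. reflexivity. Qed.

Section C2.
Variable C : numClosedFieldType.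
Lemma sum4 (F : nat -> C) : \sum_(a < 4) F a = F 0%N + F 1%N + F 2%N + F 3%N.
Proof. by rewrite !big_ord_recr big_ord0 /= add0r. Qed.
Lemma zc_sum4 f : zc C (zsum4 f) = \sum_(a < 4) zc C (f a).
Proof. by rewrite (sum4 (fun a => zc C (f a))) /zsum4 !zc_add. Qed.
Lemma zc_delta a c : zc C (deltaz a c) = (a == c)%:R *+ 4.
Proof. rewrite /deltaz; case: eqP => _; rewrite /zc /=; ring. Qed.

Definition rank1 (u : nat -> z8) : 'M[C]_4 :=
  \matrix_(a, b) (zc C (u a) * (zc C (u b))^* / 4%:R).

Lemma four_neq0 : (4%:R : C) != 0. Proof. by rewrite pnatr_eq0. Qed.

Lemma meas_ok F : check_meas F -> projective_measurement (fun k : 'I_4 => rank1 (F k)).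
Proof.
case/andP => /all4P h1 /all4P h2.
have hd : forall (k l : 'I_4) , \sum_(b < 4) (zc C (F k b))^* * zc C (F l b) = (k == l :> nat)%:R *+ 4.
  move=> k l; have /all4P/(_ l)/(zc_eq C) := h1 k.
  rewrite zc_delta => <-; rewrite zc_sum4; apply: eq_bigr => b _; by rewrite zc_mul zc_conj.
split.
- move=> k; apply/matrixP => a b; rewrite !mxE !rmorphM /= fmorphV conjCK rmorph_nat; ring.
- move=> k; apply/matrixP => a c; rewrite !mxE.
  rewrite (eq_bigr (fun b : 'I_4 => zc C (F k a) * (zc C (F k c))^* / 16%:R *
     ((zc C (F k b))^* * zc C (F k b)))); last first.
    move=> b _; rewrite !mxE. by field; rewrite ?pnatr_eq0.
  rewrite -mulr_sumr hd eqxx /=. by field; rewrite ?pnatr_eq0.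
- move=> k l kl; apply/matrixP => a c; rewrite !mxE.
  rewrite (eq_bigr (fun b : 'I_4 => zc C (F k a) * (zc C (F l c))^* / 16%:R *
     ((zc C (F k b))^* * zc C (F l b)))); last first.
    move=> b _; rewrite !mxE. by field; rewrite ?pnatr_eq0.
  rewrite -mulr_sumr hd; move: kl; rewrite -val_eqE => /negbTE ->; by rewrite /= mul0rn mulr0.
- apply/matrixP => a c; rewrite summxE !mxE.
  have /all4P/(_ c)/(zc_eq C) := h2 a.
  rewrite zc_sum4 zc_delta => h.
  rewrite (eq_bigr (fun k : 'I_4 => zc C (zmul (F k a) (zconj (F k c))) / 4%:R)); last first.
    by move=> k _; rewrite !mxE zc_mul zc_conj.
  rewrite -mulr_suml h -val_eqE /=.
  case: (_ == _) => /=; by field; rewrite ?pnatr_eq0.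
Qed.

Lemma sum_pick (F : nat -> C) (y : C) (x : nat) : (x < 4)%N ->
  \sum_(b < 4) F b * (if (b : nat) == x then y else 0) = F x * y.
Proof.
rewrite (sum4 (fun b => F b * (if b == x then y else 0))).
by case: x => [|[|[|[|x]]]] //= _; rewrite !mulr0 ?add0r ?addr0.
Qed.

Lemma outcome_zero u v n m : zeqb (amp u v n m) z0 ->
  outcome_prob (rank1 u) (rank1 v) (bell C (n, m)) = 0.
Proof.
move/(zc_eq C); rewrite {2}/zc /= => hz.
set c := \sum_(a < 4) \sum_(b < 4) (zc C (u a))^* * (zc C (v b))^* * bell C (n, m) a b.
have hc : c = 0.
  have -> : c = 2^-1 * zc C (amp u v n m); last by rewrite hz; ring.
  rewrite /amp zc_sum4 mulr_sumr; apply: eq_bigr => a _.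
  rewrite (eq_bigr (fun b : 'I_4 => ((zc C (u a))^* * (zc C (v b))^*) *
        (if (b : nat) == ((a + m) %% 4)%N then 2^-1 * 'i ^+ (a * n) else 0))); last first.
    by move=> b _; rewrite !mxE.
  rewrite (sum_pick (fun b => (zc C (u a))^* * (zc C (v b))^*)); last by rewrite ltn_pmod.
  by rewrite !zc_mul !zc_conj zc_pow zc_i; ring.
have ht : forall a b, tens_act (rank1 u) (rank1 v) (bell C (n, m)) a b = zc C (u a) * zc C (v b) / 16%:R * c.
  move=> a b; rewrite mxE /c mulr_sumr; apply: eq_bigr => a' _.
  rewrite mulr_sumr; apply: eq_bigr => b' _; rewrite !mxE.
  by field; rewrite ?pnatr_eq0.
rewrite /outcome_prob; apply: big1 => a _; apply: big1 => b _.
by rewrite ht hc !mulr0.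
Qed.

Lemma main_lemma (S : seq (nat * nat)) (hS : size S = 4%N) : good S ->
  oneway_LOCC_proj_distinguishable (@bell_family C S).
Proof.
case/and3P => hA /all4P hB /all4P hG.
left; exists 4%N, 4%N, (fun k => rank1 (FA k)),
  (fun k l => rank1 (chi (nth (0,0)%N S l) (FA k))),
  (fun k l => cast_ord (esym hS) l).
split.
- exact: (meas_ok FA hA).
- move=> k; exact: (meas_ok (fun l => chi (nth (0,0)%N S l) (FA k)) (hB k)).
- move=> s k l hp.
  have s4 : (s < 4)%N by rewrite -hS ltn_ord.
  have hs : (s : nat) \in iota 0 4 by rewrite mem_iota add0n s4.
  have := allP (all4P _ (hG k) l) s hs.
  case/orP => [/eqP hsl|hz].
    by apply: val_inj; rewrite /= hsl.
  move: hp; rewrite /bell_family [nth _ S s]surjective_pairing (outcome_zero _ _ _ _ hz).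
  by rewrite eqxx.
Qed.
End C2.

Theorem theorem5 (C : numClosedFieldType) :
  forall T : seq (nat * nat), T \in theorem5_sets ->
    oneway_LOCC_proj_distinguishable (@bell_family C ((0, 0)%N :: T)).
Proof.
move=> T hT.
have /andP[/eqP hs hg] := allP all_good T hT.
have hs4 : size ((0, 0)%N :: T) = 4%N by rewrite /= hs.
exact: (main_lemma C _ hs4 hg).
Qed.
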